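(* Let $n\geq 0$, let $\sigma_1,\ldots,\sigma_{n+1}\in\Sigma^*$ and $L_1,\ldots,L_n\subseteq\Sigma^*$, and let $L=\sigma_{n+1}L_n^*\sigma_nL_{n-1}^*\cdots\sigma_2L_1^*\sigma_1$. Then $$\mathrm{cl}\,\mathrm{conv}\,\xi(L)=\mathrm{cl}\,\mathrm{conv}\Big(\xi(\{\sigma_{n+1}\sigma_n\cdots\sigma_1\})\cup\bigcup_{i=1}^n\Gamma^{-1}_{\sigma_i\sigma_{i-1}\cdots\sigma_1}\big(\mathrm{cl}\,\mathrm{conv}\,\xi(L_i)\big)\Big).$$
   Context: Fix an integer base $r\geq 2$ and a dimension $m\geq 1$. Let $\Sigma=\{0,1,\ldots,r-1\}^m$, $\Sigma^*$ the set of finite words over $\Sigma$, $\epsilon$ the empty word, $|\sigma|$ the length of $\sigma$. For $\sigma=b_1\cdots b_k\in\Sigma^*$ define $\rho(\sigma)=\sum_{i=1}^k r^{i-1}b_i\in\mathbb{N}^m$ ($\rho(\epsilon)=0$). For $\sigma\in\Sigma^*$, $\Gamma_\sigma:\mathbb{R}^m\to\mathbb{R}^m$ is $\Gamma_\sigma(x)=r^{|\sigma|}x+\rho(\sigma)$. For a nonempty word $\sigma$, $\xi(\sigma)=\rho(\sigma)/(1-r^{|\sigma|})$; $\xi$ is undefined on $\epsilon$, and for a language $L$, $\xi(L)=\{\xi(\sigma):\sigma\in L,\ \sigma\neq\epsilon\}$ (so $\xi(\{\epsilon\})=\emptyset$). $\mathrm{cl}$ is closure and $\mathrm{conv}$ convex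 hull in $\mathbb{R}^m$. *)

(* Defs.v *)
From mathcomp Require Import ssreflect ssrfun ssrbool eqtype ssrnat seq fintype.
From Stdlib Require Import Reals.
Set Implicit Arguments.
Unset Strict Implicit.

Local Open Scope R_scope.

Definition vec (m : nat) := 'I_m -> R.
Definition vset (m : nat) := vec m -> Prop.

(* Alphabet Sigma = {0,...,r-1}^m and words over it. *)
Definition letter (r m : nat) := 'I_m -> 'I_r.
Definition word (r m : nat) := seq (letter r m).
Definition lang (r m : nat) := word r m -> Prop.

(* rho(b_1 ... b_k) = sum_i r^(i-1) b_i  (Horner form, b_1 first). *)
Fixpoint rho (r m : nat) (w : word r m) : vec m :=
  fun j => match w with
           | [::] => 0
           | b :: w' => INR (nat_of_ord (b j)) + INR r * rho w' j
           end.

Definition Gamma (r m : nat) (w : word r m) (x : vec m) : vec m :=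
  fun j => INR r ^ size w * x j + rho w j.

Definition Gamma_inv_set (r m : nat) (w : word r m) (S : vset m) : vset m :=
  fun x => S (Gamma w x).

(* xi(sigma) = rho(sigma)/(1 - r^|sigma|) (used only for nonempty sigma). *)
Definition xi (r m : nat) (w : word r m) : vec m :=
  fun j => rho w j / (1 - INR r ^ size w).

Definition xi_set (r m : nat) (L : lang r m) : vset m :=
  fun x => exists w, L w /\ w <> [::] /\ (forall j, x j = xi w j).

Fixpoint sumR (k : nat) (f : nat -> R) : R :=
  match k with
  | O => 0
  | S k' => sumR k' f + f k'
  end.

Definition conv (m : nat) (S : vset m) : vset m :=
  fun x => exists (k : nat) (c : nat -> R) (p : nat -> vec m),
    (forall i, (i < k)%nat -> 0 <= c i /\ S (p i)) /\
    sumR k c = 1 /\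
    (forall j, x j = sumR k (fun i => c i * p i j)).

Definition cl (m : nat) (S : vset m) : vset m :=
  fun x => forall eps, 0 < eps ->
    exists y, S y /\ (forall j, Rabs (x j - y j) < eps).

Definition set_eq (m : nat) (A B : vset m) : Prop := forall x, A x <-> B x.

Definition set_union (m : nat) (A B : vset m) : vset m := fun x => A x \/ B x.

Definition bigunion (m : nat) (n : nat) (F : nat -> vset m) : vset m :=
  fun x => exists i, (1 <= i)%nat /\ (i <= n)%nat /\ F i x.

Definition singleton_lang (r m : nat) (w : word r m) : lang r m := fun v => v = w.

Definition concat_lang (r m : nat) (A B : lang r m) : lang r m :=
  fun w => exists u v, A u /\ B v /\ w = u ++ v.

Definition star (r m : nat) (L : lang r m) : lang r m :=
  fun w => exists ws : seq (word r m),
    (forall i, (i < size ws)%nat -> L (nth [::] ws i)) /\ w = flatten ws.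

(* With sigma 1, ..., sigma (n+1) and Ls 1, ..., Ls n:
   Lbuild 0     = {sigma_1}
   Lbuild (k+1) = sigma_(k+2) Ls_(k+1)^* (Lbuild k),
   so Lbuild n = sigma_(n+1) L_n^* sigma_n L_(n-1)^* ... sigma_2 L_1^* sigma_1. *)
Fixpoint Lbuild (r m : nat) (sigma : nat -> word r m) (Ls : nat -> lang r m)
    (k : nat) : lang r m :=
  match k with
  | O => singleton_lang (sigma 1%nat)
  | S k' => concat_lang (singleton_lang (sigma (k' + 2)%nat))
             (concat_lang (star (Ls (k' + 1)%nat)) (Lbuild sigma Ls k'))
  end.

Fixpoint prefw (r m : nat) (sigma : nat -> word r m) (i : nat) : word r m :=
  match i with
  | O => [::]
  | S i' => sigma i ++ prefw sigma i'
  end.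

(* Main.v *)
Set Warnings "-notation-overridden".
Require Import Defs.
From mathcomp Require Import ssreflect ssrfun ssrbool eqtype ssrnat seq fintype.
From Stdlib Require Import Reals Lra Lia FunctionalExtensionality.
Set Implicit Arguments.
Unset Strict Implicit.
Local Open Scope R_scope.

Ltac slia := repeat match goal with H : is_true (leq _ _) |- _ => move/leP: H => H; rewrite -?plusE -?minusE -?multE in H end;
  try (apply/leP); rewrite -?plusE -?minusE -?multE; lia.



Lemma sumR_ext k f g : (forall i, (i < k)%nat -> f i = g i) -> sumR k f = sumR k g.
Proof.
elim: k => [|k IH] H //=. rewrite IH; last by move=> i Hi; apply: H; slia.
by rewrite H //; slia.
Qed.

Lemma sumR_lin k a b f g : sumR k (fun i => a * f i + b * g i) = a * sumR k f + b * sumR k g.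
Proof. elim: k => [|k IH] /=; [ring| rewrite IH; ring]. Qed.

Lemma sumR_scal k a f : sumR k (fun i => a * f i) = a * sumR k f.
Proof. elim: k => [|k IH] /=; [ring| rewrite IH; ring]. Qed.

Lemma sumR_add k1 k2 f : sumR (k1 + k2) f = sumR k1 f + sumR k2 (fun i => f (k1 + i)%nat).
Proof. elim: k2 => [|k2 IH] /=; first by rewrite addn0; ring.
rewrite addnS /= IH; ring. Qed.

Lemma sumR_nonneg k f : (forall i, (i < k)%nat -> 0 <= f i) -> 0 <= sumR k f.
Proof. elim: k => [|k IH] H /=; first lra.
have := H k ltac:(slia). have := IH (fun i Hi => H i ltac:(slia)). lra. Qed.

Lemma sumR_zero k f : (forall i, (i < k)%nat -> 0 <= f i) -> sumR k f = 0 ->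
  forall i, (i < k)%nat -> f i = 0.
Proof.
elim: k => [|k IH] H /= Hs i Hi //.
have h1 := @sumR_nonneg k f (fun i Hi => H i ltac:(slia)). have h2 := H k ltac:(slia).
case: (Nat.eq_dec i k) => [->|Hik]; first lra.
apply: IH => //; [move=> i0 Hi0; apply: H; slia| lra| slia].
Qed.

Section Conv.
Variable m : nat.
Implicit Types S T : vset m.

Lemma conv_incl S x : S x -> conv S x.
Proof.
move=> Sx; exists 1%nat, (fun _ => 1), (fun _ => x); split; last split.
- move=> i _; split; [lra|done].
- simpl; ring.
- move=> j /=; ring.
Qed.

Lemma conv_mono S T x : (forall y, S y -> T y) -> conv S x -> conv T x.
Proof.
move=> ST [k [c [p [H1 [H2 H3]]]]]; exists k, c, p; split => //.
move=> i Hi; case: (H1 i Hi) => ??; split => //; exact: ST.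
Qed.

Lemma conv_bin S a b t x : conv S a -> conv S b -> 0 <= t <= 1 ->
  (forall j, x j = t * a j + (1 - t) * b j) -> conv S x.
Proof.
move=> [k1 [c1 [p1 [A1 [A2 A3]]]]] [k2 [c2 [p2 [B1 [B2 B3]]]]] Ht Hx.
exists (k1 + k2)%nat, (fun i => if (i < k1)%nat then t * c1 i else (1 - t) * c2 (i - k1)%nat),
  (fun i => if (i < k1)%nat then p1 i else p2 (i - k1)%nat).
split; last split.
- move=> i Hi; case: (ltnP i k1) => Hik.
  + case: (A1 i Hik) => ??; split => //; apply: Rmult_le_pos; lra.
  + have Hi2 : (i - k1 < k2)%nat by slia.
    case: (B1 _ Hi2) => ??; split => //; apply: Rmult_le_pos; lra.
- rewrite sumR_add.
  rewrite (@sumR_ext k1 _ (fun i => t * c1 i)); last by move=> i ->.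
  rewrite (@sumR_ext k2 _ (fun i => (1 - t) * c2 i)); last first.
    move=> i _; have -> : (k1 + i < k1)%nat = false by rewrite ltnNge leq_addr.
    by have -> : (k1 + i - k1 = i)%nat by slia.
  rewrite !sumR_scal A2 B2; ring.
- move=> j; rewrite sumR_add.
  rewrite (@sumR_ext k1 _ (fun i => t * (c1 i * p1 i j))); last first.
    by move=> i ->; ring.
  rewrite (@sumR_ext k2 _ (fun i => (1 - t) * (c2 i * p2 i j))); last first.
    move=> i _; have -> : (k1 + i < k1)%nat = false by rewrite ltnNge leq_addr.
    have -> : (k1 + i - k1 = i)%nat by slia. ring.
  rewrite !sumR_scal Hx A3 B3; ring.
Qed.

Definition bconvex T := forall a b t x, T a -> T b -> 0 <= t <= 1 ->
  (forall j, x j = t * a j + (1 - t) * b j) -> T x.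

Lemma conv_of_bconvex T x : bconvex T -> conv T x -> T x.
Proof.
move=> HT [k [c [p [H1 [H2 H3]]]]].
elim: k c p x H1 H2 H3 => [|k IH] c p x H1 H2 H3; first by simpl in H2; lra.
simpl in H2.
have Hck := H1 k ltac:(slia).
have Hs := @sumR_nonneg k c (fun i Hi => proj1 (H1 i ltac:(slia))).
case: (Req_dec (c k) 1) => Hc1.
- have Hz := @sumR_zero k c (fun i Hi => proj1 (H1 i ltac:(slia))) (ltac:(lra) : sumR k c = 0).
  have -> : x = p k.
    apply: functional_extensionality => j; rewrite H3 /=.
    rewrite (@sumR_ext k _ (fun i => 0 * p i j)); last by move=> i Hi; rewrite Hz.
    rewrite sumR_scal Hc1; ring.
  exact: (proj2 Hck).
- have Hpos : 0 < 1 - c k by lra.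
  pose y := fun j => sumR k (fun i => (c i / (1 - c k)) * p i j).
  have Hy : T y.
    apply: (IH (fun i => c i / (1 - c k)) p) => //.
    + move=> i Hi; case: (H1 i ltac:(slia)) => ??; split => //.
      apply: Rmult_le_pos => //; apply: Rlt_le; apply: Rinv_0_lt_compat; lra.
    + rewrite (@sumR_ext k _ (fun i => / (1 - c k) * c i)); last by move=> i _; rewrite /Rdiv Rmult_comm.
      rewrite sumR_scal; have -> : sumR k c = 1 - c k by lra. field; lra.
  apply: (HT y (p k) (1 - c k)) => //; [exact: (proj2 Hck)|lra|].
  move=> j; rewrite H3 /= /y.
  rewrite (@sumR_ext k (fun i => c i / (1 - c k) * p i j) (fun i => / (1 - c k) * (c i * p i j))); last first.
    by move=> i _; rewrite /Rdiv; ring.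
  rewrite sumR_scal; field; lra.
Qed.

Lemma conv_bconvex S : bconvex (conv S).
Proof. move=> a b t x Ha Hb Ht Hx; exact: (conv_bin Ha Hb Ht Hx). Qed.

Lemma conv_conv S x : conv (conv S) x -> conv S x.
Proof. apply: conv_of_bconvex; exact: conv_bconvex. Qed.

Lemma cl_incl S x : S x -> cl S x.
Proof. move=> Sx eps He; exists x; split => // j; rewrite Rminus_diag Rabs_R0 //. Qed.

Lemma cl_mono S T x : (forall y, S y -> T y) -> cl S x -> cl T x.
Proof. move=> ST H eps He; case: (H eps He) => y [Sy Hy]; exists y; split => //; exact: ST. Qed.

Lemma cl_cl S x : cl (cl S) x -> cl S x.
Proof.
move=> H eps He; case: (H (eps/2) ltac:(lra)) => y [Hy1 Hy2].
case: (Hy1 (eps/2) ltac:(lra)) => z [Sz Hz]; exists z; split => // j.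
have := Hy2 j; have := Hz j.
have := Rabs_triang (x j - y j) (y j - z j).
have -> : x j - y j + (y j - z j) = x j - z j by ring. lra.
Qed.

Lemma cl_bconvex T : bconvex T -> bconvex (cl T).
Proof.
move=> HT a b t x Ha Hb Ht Hx eps He.
case: (Ha eps He) => a' [Ta' Ha']; case: (Hb eps He) => b' [Tb' Hb'].
exists (fun j => t * a' j + (1 - t) * b' j); split.
- exact: (HT a' b' t).
- move=> j; rewrite Hx.
  have -> : t * a j + (1 - t) * b j - (t * a' j + (1 - t) * b' j)
     = t * (a j - a' j) + (1 - t) * (b j - b' j) by ring.
  have := Ha' j; have := Hb' j => h1 h2.
  apply: Rle_lt_trans; first apply: Rabs_triang.
  have e1 : Rabs t = t by apply: Rabs_pos_eq; lra.
  have e2 : Rabs (1 - t) = 1 - t by apply: Rabs_pos_eq; lra.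
  rewrite !Rabs_mult e1 e2.
  have h3 : (1 - t) * Rabs (b j - b' j) <= (1 - t) * eps by apply: Rmult_le_compat_l; lra.
  case: (Req_dec t 0) => Ht0.
  + subst t; lra.
  + have : t * Rabs (a j - a' j) < t * eps by apply: Rmult_lt_compat_l; lra.
    lra.
Qed.

Lemma clconv_idem S x : cl (conv (cl (conv S))) x -> cl (conv S) x.
Proof.
move=> H; apply: cl_cl; apply: cl_mono H => y; apply: conv_of_bconvex.
apply: cl_bconvex; exact: conv_bconvex.
Qed.

Lemma clconv_sub S T x : (forall y, S y -> cl (conv T) y) -> cl (conv S) x -> cl (conv T) x.
Proof.
move=> ST H; apply: clconv_idem; apply: cl_mono H => y; apply: conv_mono; exact: ST.
Qed.

End Conv.



Section Words.
Variables (r m : nat).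
Hypothesis hr : (2 <= r)%nat.

Definition Phi (w : word r m) (y : vec m) : vec m :=
  fun j => (y j - rho w j) / INR r ^ size w.

Lemma Rr2 : 2 <= INR r.
Proof. have : (2 <= r)%coq_nat by apply/leP. move/le_INR. simpl. lra. Qed.

Lemma powr_pos n : 0 < INR r ^ n.
Proof. apply: pow_lt; have := Rr2; lra. Qed.

Lemma powr_ge1 n : 1 <= INR r ^ n.
Proof. apply: pow_R1_Rle; have := Rr2; lra. Qed.

Lemma powr_ge2 n : (0 < n)%nat -> 2 <= INR r ^ n.
Proof.
case: n => [//|n] _ /=. have := powr_ge1 n; have := Rr2 => h1 h2.
have : 2 * 1 <= INR r * INR r ^ n by apply: Rmult_le_compat; lra. lra.
Qed.

Lemma pow_grow y k : 2 <= y -> INR k + 1 <= y ^ k.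
Proof.
move=> Hy; elim: k => [|k IH]; first by simpl; lra.
rewrite S_INR /=. have : 2 * (INR k + 1) <= y * y ^ k by apply: Rmult_le_compat; try lra; have := pos_INR k; lra.
have := pos_INR k; lra.
Qed.

Lemma rho_cat (u v : word r m) j : rho (u ++ v) j = rho u j + INR r ^ size u * rho v j.
Proof. elim: u => [|b u IH] /=; first ring. rewrite IH; ring. Qed.

Lemma Phi_nil y : Phi [::] y = y.
Proof. apply: functional_extensionality => j; rewrite /Phi /=; field. Qed.

Lemma Phi_cat u v y : Phi v (Phi u y) = Phi (u ++ v) y.
Proof.
apply: functional_extensionality => j; rewrite /Phi rho_cat size_cat pow_add.
have := powr_pos (size u); have := powr_pos (size v) => h1 h2.
field; lra.
Qed.

Lemma xi_rho (u : word r m) j : u <> [::] -> rho u j = xi u j * (1 - INR r ^ size u).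
Proof.
move=> Hu; have : (0 < size u)%nat by case: u Hu.
move/powr_ge2 => h; rewrite /xi; field; lra.
Qed.

Lemma Phi_xi u y j : u <> [::] ->
  Phi u y j = / INR r ^ size u * y j + (1 - / INR r ^ size u) * xi u j.
Proof.
move=> Hu; rewrite /Phi (xi_rho j Hu).
have : (0 < size u)%nat by case: u Hu.
move/powr_ge2 => h; field; lra.
Qed.

Lemma Phi_aff P a b t (x : vec m) : (forall j, x j = t * a j + (1 - t) * b j) ->
  forall j, Phi P x j = t * Phi P a j + (1 - t) * Phi P b j.
Proof. move=> Hx j; rewrite /Phi Hx; have := powr_pos (size P); move=> h; field; lra. Qed.

Lemma Gamma_Phi P x : Gamma P (Phi P x) = x.
Proof.
apply: functional_extensionality => j; rewrite /Gamma /Phi.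
have := powr_pos (size P); move=> h; field; lra.
Qed.

Lemma Phi_Gamma P x : Phi P (Gamma P x) = x.
Proof.
apply: functional_extensionality => j; rewrite /Gamma /Phi.
have := powr_pos (size P); move=> h; field; lra.
Qed.

Lemma fin_bound (f : 'I_m -> R) : exists B, 0 < B /\ forall j, f j <= B.
Proof.
pose g := fun k => match @insub nat (fun k => (k < m)%nat) 'I_m k with Some j => f j | None => 0 end.
have H : forall k, exists B, 0 < B /\ forall i, (i < k)%nat -> g i <= B.
  elim => [|k [B [HB IH]]]; first by exists 1; split => //; lra.
  exists (Rmax B (g k)); split; first by apply: Rlt_le_trans (Rmax_l _ _).
  move=> i; rewrite ltnS leq_eqVlt; case/orP => [/eqP ->|Hi]; first exact: Rmax_r.
  apply: Rle_trans (Rmax_l _ _); exact: IH.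
case: (H m) => B [HB HBi]; exists B; split => // j.
have := HBi (val j) (ltn_ord j). by rewrite /g valK.
Qed.

Lemma iter_Phi w y k j : w <> [::] ->
  iter k (Phi w) y j = xi w j + (y j - xi w j) / INR r ^ (size w * k).
Proof.
move=> Hw; elim: k => [|k IH] /=; first by rewrite muln0 /=; field.
rewrite Phi_xi // IH. rewrite -multE Nat.mul_succ_r. rewrite multE pow_add.
have := powr_pos (size w); have := powr_pos (size w * k) => h1 h2. field; lra.
Qed.

Lemma approx_fixed (K : vset m) w y : w <> [::] -> K y ->
  (forall z, K z -> K (Phi w z)) -> cl K (xi w).
Proof.
move=> Hw Ky Hinv eps He.
case: (fin_bound (fun j => Rabs (y j - xi w j))) => B [HB HBj].
case: (INR_unbounded (B / eps)) => k Hk.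
exists (iter k (Phi w) y); split.
  by elim: k {Hk} => [|k IH] //=; apply: Hinv.
move=> j; rewrite iter_Phi //.
have Hs : (0 < size w)%nat by move: Hw; case: (w) => //.
have Hp := pow_grow k (powr_ge2 Hs). rewrite pow_mult.
have -> : xi w j - (xi w j + (y j - xi w j) / (INR r ^ size w) ^ k)
  = - ((y j - xi w j) / (INR r ^ size w) ^ k) by ring.
set X := (INR r ^ size w) ^ k in Hp *.
rewrite Rabs_Ropp /Rdiv Rabs_mult Rabs_inv (Rabs_pos_eq X); last by have := pos_INR k; lra.
have HBj' := HBj j.
have Hk' : B < eps * INR k.
  have := Rmult_lt_compat_l eps _ _ He Hk. rewrite /Rdiv.
  have -> : eps * (B * / eps) = B by field; lra. lra.
have := pos_INR k => Hk0.
apply: (Rmult_lt_reg_r X); first lra.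
rewrite Rmult_assoc Rinv_l; last lra.
rewrite Rmult_1_r.
have : eps * INR k <= eps * (X - 1) by apply: Rmult_le_compat_l; lra.
lra.
Qed.

End Words.



Section Conv2.
Variables (r m : nat).
Hypothesis hr : (2 <= r)%nat.

Lemma rho_nseq (l : word r m) k j : l <> [::] ->
  rho (flatten (nseq k l)) j = xi l j * (1 - (INR r ^ size l) ^ k).
Proof.
move=> Hl; elim: k => [|k IH] /=; first ring.
rewrite rho_cat IH (xi_rho hr j Hl); ring.
Qed.

Lemma size_nseq_flat (l : word r m) k : size (flatten (nseq k l)) = (size l * k)%nat.
Proof. elim: k => [|k IH] /=; first by rewrite muln0. by rewrite size_cat IH mulnS. Qed.

Lemma converge (q P l : word r m) : l <> [::] -> forall eps, 0 < eps ->
  exists k, (0 < k)%nat /\ forall j,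
    Rabs (Phi P (xi l) j - xi (q ++ flatten (nseq k l) ++ P) j) < eps.
Proof.
move=> Hl eps He.
set RP := INR r ^ size P. set Rq := INR r ^ size q. set Y := INR r ^ size l.
have hRP : 1 <= RP by apply: powr_ge1.
have hRq : 1 <= Rq by apply: powr_ge1.
have hY : 2 <= Y by apply: powr_ge2 => //; case: (l) Hl.
case: (fin_bound (fun j => Rabs (rho q j + Rq * xi l j + (rho P j - xi l j) / RP))) => B [HB HBj].
case: (INR_unbounded (B / eps)) => k Hk.
have HBe : 0 < B / eps by apply: Rdiv_lt_0_compat.
have Hk0 : (0 < k)%nat.
  case: k Hk => [|k] //=; lra.
exists k; split => // j.
set X := Y ^ k.
have HX : INR k + 1 <= X by apply: pow_grow.
have := pos_INR k => Hk1.
have Hw : xi (q ++ flatten (nseq k l) ++ P) j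
   = (rho q j + Rq * (xi l j * (1 - X) + X * rho P j)) / (1 - Rq * (X * RP)).
  rewrite /xi !rho_cat !size_cat !pow_add rho_nseq // size_nseq_flat pow_mult -/Y -/X -/Rq.
  done.
have HD : 1 <= Rq * RP by have := Rmult_le_compat 1 Rq 1 RP; lra.
have HDX : X <= Rq * RP * X by have := Rmult_le_compat_r X 1 (Rq * RP); lra.
have Heq : Rq * (X * RP) = Rq * RP * X by ring.
have Hne : 1 - Rq * (X * RP) <> 0 by lra.
have -> : Phi P (xi l) j - xi (q ++ flatten (nseq k l) ++ P) j =
   - ((rho q j + Rq * xi l j + (rho P j - xi l j) / RP) / (1 - Rq * (X * RP))).
  rewrite Hw /Phi -/RP; field; split; lra.
have HBj' := HBj j.
set E := rho q j + Rq * xi l j + (rho P j - xi l j) / RP in HBj' *.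
have Hden : Rq * (X * RP) - 1 >= INR k.
  lra.
rewrite Rabs_Ropp /Rdiv Rabs_mult Rabs_inv.
have -> : Rabs (1 - Rq * (X * RP)) = Rq * (X * RP) - 1.
  rewrite Rabs_left; [ring| lra].
have Hk' : B < eps * INR k.
  have := Rmult_lt_compat_l eps _ _ He Hk. rewrite /Rdiv.
  have -> : eps * (B * / eps) = B by field; lra. lra.
apply: (Rmult_lt_reg_r (Rq * (X * RP) - 1)); first lra.
rewrite Rmult_assoc Rinv_l; last lra.
rewrite Rmult_1_r.
have : eps * INR k <= eps * (Rq * (X * RP) - 1) by apply: Rmult_le_compat_l; lra.
lra.
Qed.

Lemma Phi_clconv (P : word r m) (S : vset m) z : cl (conv S) z ->
  cl (conv (fun v => exists u, S u /\ v = Phi P u)) (Phi P z).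
Proof.
have hR := powr_pos hr (size P).
have Hc : forall y, conv S y -> conv (fun v => exists u, S u /\ v = Phi P u) (Phi P y).
  move=> y [k [c [p [H1 [H2 H3]]]]].
  exists k, c, (fun i => Phi P (p i)); split; last split => //.
  - move=> i Hi; case: (H1 i Hi) => ??; split => //; by exists (p i).
  - move=> j; rewrite /Phi H3.
    rewrite (@sumR_ext k (fun i => c i * ((p i j - rho P j) / INR r ^ size P)) (fun i => / INR r ^ size P * (c i * p i j) + (- rho P j / INR r ^ size P) * c i)); last first.
      by move=> i _; field; lra.
    rewrite sumR_lin H2; field; lra.
move=> Hz eps He; case: (Hz eps He) => y [Hy Hyz]; exists (Phi P y); split; first exact: Hc.
move=> j; rewrite /Phi.
have -> : (z j - rho P j) / INR r ^ size P - (y j - rho P j) / INR r ^ size P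
  = (z j - y j) * / INR r ^ size P by field; lra.
rewrite Rabs_mult Rabs_inv (Rabs_pos_eq (INR r ^ size P)); last lra.
have := Hyz j; have := powr_ge1 hr (size P) => h1 h2.
apply: Rle_lt_trans h2.
have h4 : / INR r ^ size P <= 1 by rewrite -Rinv_1; apply: Rinv_le_contravar; lra.
have := Rmult_le_compat_l _ _ _ (Rabs_pos (z j - y j)) h4. lra.
Qed.

End Conv2.


Lemma nilP T (l : seq T) : l = [::] \/ l <> [::].
Proof. by case: l => [|? ?]; [left|right]. Qed.


Section Main.
Variables (r m : nat).
Hypothesis hr : (2 <= r)%nat.
Variables (n : nat) (sigma : nat -> word r m) (Ls : nat -> lang r m).

Definition Gp : vset m := fun x =>
  (prefw sigma n.+1 <> [::] /\ x = xi (prefw sigma n.+1)) \/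
  exists i l, (1 <= i)%nat /\ (i <= n)%nat /\ Ls i l /\ l <> [::] /\
    x = Phi (prefw sigma i) (xi l).

Definition K := conv Gp.

Lemma star_inv (E : vset m) (L : lang r m) :
  (forall l z, L l -> E z -> E (Phi l z)) -> forall t z, star L t -> E z -> E (Phi t z).
Proof.
move=> HE t z [ws [Hws ->]]; elim: ws z Hws => [|u ws IH] z Hws Ez /=.
  by rewrite Phi_nil.
rewrite -Phi_cat //; apply: IH.
  by move=> i Hi; apply: (Hws i.+1).
by apply: HE => //; apply: (Hws 0%nat).
Qed.

Lemma inv_step i l z : (1 <= i)%nat -> (i <= n)%nat -> Ls i l ->
  K (Phi (prefw sigma i) z) -> K (Phi (prefw sigma i) (Phi l z)).
Proof.
move=> H1 H2 Hl Kz.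
case: (nilP l) => [->|Hne]; first by rewrite Phi_nil.
set P := prefw sigma i.
have hR := powr_pos hr (size l).
apply: (conv_bin (t := / INR r ^ size l) Kz (b := Phi P (xi l))).
- apply: conv_incl; right; exists i, l; do 4 (split => //).
- split; [apply: Rlt_le; exact: Rinv_0_lt_compat|].
  rewrite -Rinv_1; apply: Rinv_le_contravar; [lra| exact: powr_ge1].
- move=> j; apply: (Phi_aff hr) => j'. exact: (Phi_xi hr).
Qed.

Lemma inv_build k : (k <= n)%nat -> forall w, Lbuild sigma Ls k w ->
  forall z, K (Phi (prefw sigma k.+1) z) -> K (Phi w z).
Proof.
elim: k => [|k IH] Hk w /=.
  by move=> -> z; rewrite cats0.
move=> [u [v [Hu [[t [w' [Ht [Hw' Hv]]] ->]]]]] z Kz.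
rewrite Hu Hv -!Phi_cat //.
apply: (IH ltac:(slia) _ Hw').
rewrite addn1 in Ht.
apply: (@star_inv (fun z => K (Phi (prefw sigma k.+1) z)) (Ls k.+1) _ t) => //.
  move=> l z0 Hl Kz0; apply: inv_step => //.
rewrite Phi_cat // addn2; exact: Kz.
Qed.

Lemma K_s z : K z -> K (Phi (prefw sigma n.+1) z).
Proof.
move=> Kz; set s := prefw sigma n.+1.
case: (nilP s) => [->|Hne]; first by rewrite Phi_nil.
have hR := powr_pos hr (size s).
apply: (conv_bin (t := / INR r ^ size s) Kz (b := xi s)).
- apply: conv_incl; left; split => //.
- split; [apply: Rlt_le; exact: Rinv_0_lt_compat|].
  rewrite -Rinv_1; apply: Rinv_le_contravar; [lra| exact: powr_ge1].
- move=> j; exact: (Phi_xi hr).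
Qed.

Lemma flatten_ne (ws : seq (word r m)) : flatten ws <> [::] ->
  exists i, (i < size ws)%nat /\ nth [::] ws i <> [::].
Proof.
elim: ws => [|u ws IH] //=.
case: (nilP u) => [-> /= H|Hu _]; last by exists 0%nat.
by case: (IH H) => i [??]; exists i.+1.
Qed.

Lemma build_ne k w : Lbuild sigma Ls k w -> w <> [::] ->
  prefw sigma k.+1 <> [::] \/ exists i l, (1 <= i)%nat /\ (i <= k)%nat /\ Ls i l /\ l <> [::].
Proof.
elim: k w => [|k IH] w /=.
  by move=> -> H; left; rewrite cats0.
move=> [u [v [Hu [[t [w' [[ws [Hws Ht]] [Hw' Hv]]] ->]]]]]; rewrite Hu Hv Ht addn2 => Hne.
case: (nilP (sigma k.+2)) => [E|E]; last by left; case: (sigma k.+2) E.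
case: (nilP (flatten ws)) => [F|F].
  rewrite E F /= in Hne; case: (IH _ Hw' Hne) => [H|[i [l [H1 [H2 H3]]]]].
    by left; rewrite E.
  by right; exists i, l; do 2 (split => //); slia.
case: (flatten_ne F) => i [Hi Hn]; right; exists k.+1, (nth [::] ws i); split => //; split => //.
by split => //; rewrite -addn1; apply: Hws.
Qed.

Lemma K_nonempty w : Lbuild sigma Ls n w -> w <> [::] -> exists y, K y.
Proof.
move=> Hw Hne; case: (build_ne Hw Hne) => [H|[i [l [H1 [H2 [H3 H4]]]]]].
  by exists (xi (prefw sigma n.+1)); apply: conv_incl; left.
exists (Phi (prefw sigma i) (xi l)); apply: conv_incl; right; exists i, l; do 4 (split => //).
Qed.

Lemma dir1_word w : Lbuild sigma Ls n w -> w <> [::] -> cl K (xi w).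
Proof.
move=> Hw Hne; case: (K_nonempty Hw Hne) => y Ky.
apply: (approx_fixed hr Hne Ky) => z Kz.
apply: (inv_build (leqnn n) Hw); exact: K_s.
Qed.

Lemma prefw_build k : Lbuild sigma Ls k (prefw sigma k.+1).
Proof.
elim: k => [|k IH] /=; first by rewrite /singleton_lang cats0.
exists (sigma (k + 2)), ([::] ++ prefw sigma k.+1); split; first done.
split; last by rewrite addn2.
exists [::], (prefw sigma k.+1); split; last by split.
by exists [::]; split.
Qed.

Fixpoint ext k d : word r m := match d with
  | O => [::]
  | S d => sigma (k + d + 2) ++ ext k d end.

Lemma ext_build k d u : Lbuild sigma Ls k u -> Lbuild sigma Ls (k + d) (ext k d ++ u).
Proof.
move=> Hu; elim: d => [|d IH]; first by rewrite addn0.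
rewrite addnS /=.
exists (sigma (k + d + 2)), ([::] ++ (ext k d ++ u)); split; first done.
split; last by rewrite -catA.
exists [::], (ext k d ++ u); split; last by split.
by exists [::]; split.
Qed.

Lemma mid_build i' k l : Ls i'.+1 l ->
  Lbuild sigma Ls i'.+1 (sigma (i' + 2) ++ (flatten (nseq k l) ++ prefw sigma i'.+1)).
Proof.
move=> Hl /=.
exists (sigma (i' + 2)), (flatten (nseq k l) ++ prefw sigma i'.+1); split; first done.
split => //.
exists (flatten (nseq k l)), (prefw sigma i'.+1); split; last by split => //; exact: prefw_build.
exists (nseq k l); split => // j Hj.
rewrite size_nseq in Hj; rewrite nth_nseq Hj addn1; exact: Hl.
Qed.

Lemma dir2_lim i l : (1 <= i)%nat -> (i <= n)%nat -> Ls i l -> l <> [::] ->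
  cl (xi_set (Lbuild sigma Ls n)) (Phi (prefw sigma i) (xi l)).
Proof.
case: i => [//|i'] _ Hin Hl Hne eps He.
set q := ext i'.+1 (n - i'.+1) ++ sigma (i' + 2).
case: (converge hr q (prefw sigma i'.+1) Hne He) => k [Hk Hj].
exists (xi (q ++ flatten (nseq k l) ++ prefw sigma i'.+1)); split => //.
exists (q ++ flatten (nseq k l) ++ prefw sigma i'.+1); split; last split => //.
  rewrite /q -catA.
  have := ext_build (n - i'.+1) (mid_build k Hl).
  by rewrite subnKC.
case: (l) Hne => [//|b l'] _; case: (k) Hk => [//|k'] _ /=.
by case: (q).
Qed.

End Main.

Theorem proposition2 (r m : nat) (hr : (2 <= r)%nat) (hm : (1 <= m)%nat)
  (n : nat) (sigma : nat -> word r m) (Ls : nat -> lang r m) :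
  set_eq
    (cl (conv (xi_set (Lbuild sigma Ls n))))
    (cl (conv (set_union
       (xi_set (singleton_lang (prefw sigma n.+1)))
       (bigunion n (fun i =>
          Gamma_inv_set (prefw sigma i) (cl (conv (xi_set (Ls i))))))))).
Proof.
move=> x; split.
- apply: clconv_sub => y [w [Hw [Hne Hy]]].
  have -> : y = xi w by apply: functional_extensionality.
  move: (dir1_word hr Hw Hne); apply: cl_mono => z; apply: conv_mono => v.
  case=> [[Hs ->]|[i [l [H1 [H2 [H3 [H4 ->]]]]]]].
    by left; exists (prefw sigma n.+1).
  right; exists i; do 2 (split => //).
  rewrite /Gamma_inv_set Gamma_Phi //.
  apply: cl_incl; apply: conv_incl; by exists l.
- apply: clconv_sub => y.
  case=> [[w [Hw [Hne Hy]]]|[i [H1 [H2 Hy]]]].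
    have -> : y = xi w by apply: functional_extensionality.
    apply: cl_incl; apply: conv_incl; exists w; split => //.
    rewrite Hw; exact: prefw_build.
  have := Phi_clconv hr (prefw sigma i) Hy.
  rewrite Phi_Gamma //.
  apply: clconv_sub => v [u [[l [Hl [Hne Hu]]] ->]].
  have -> : u = xi l by apply: functional_extensionality.
  move: (@dir2_lim r m hr n sigma Ls i l H1 H2 Hl Hne); apply: cl_mono => z; exact: conv_incl.
Qed.
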